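(* Let $\mu\in\Delta(S)$ and let $(\pi^{(t)})$ be the iterates of Algorithm SMISBR with parameter $\tau>0$, and suppose the algorithm does not stop at step $t$. Then for every $i\in I$, $$\max_{\pi_i'\in\Pi_i}V_i(\mu,\pi_i',\pi_{-i}^{(t)})-V_i(\mu,\pi^{(t)})\le\frac{1}{1-\delta}\Big(\Delta_{\bar i_t}^{(t)}(\bar s_t)+2\tau\log\bar A\Big),$$ where $\bar A=\max_i|A_i|$.
   Context: Markov game $\langle I,S,(A_i),(u_i),P,\delta\rangle$ with finite $I,S,A_i$, $\delta\in(0,1)$; stationary policies $\pi_i$ with $\pi_i(s)\in\Delta(A_i)$, sets $\Pi_i$, $\pi_{-i}(s,a_{-i})=\prod_{j\neq i}\pi_j(s,a_j)$. $V_i(\mu,\pi)=\mathbb E[\sum_k\delta^ku_i(s^k,a^k)]$ with $s^0\sim\mu$, $a^k\sim\pi(s^k)$, $s^{k+1}\sim P(\cdot|s^k,a^k)$. $\nu_i(s,\pi_i)=\sum_{a_i}\pi_i(s,a_i)\log\pi_i(s,a_i)$. $\tilde V_i(s,\pi)=\mathbb E[\sum_k\delta^k(u_i(s^k,a^k)-\tau\nu_i(s^k,\pi_i))\mid s^0=s]$. $\tilde Q_i(s,a_i;\pi)=\sum_{a_{-i}}\pi_{-i}(s,a_{-i})\big(u_i(s,a)-\tau\nu_i(s,\pi_i)+\delta\sum_{s'}P(s'|s,a)\tilde V_i(s',\pi)\big)$; $\tilde Q_i^{(t)}(s,p)=\sum_{a_i}p(a_i)\tilde Q_i(s,a_i;\pi^{(t)})$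 for $p\in\Delta(A_i)$. Algorithm SMISBR with $\tau>0$: $\pi_i^{(0)}(s,a_i)=1/|A_i|$. At step $t$: $BR_i^{(t)}(s,a_i)=\exp(\tilde Q_i(s,a_i;\pi^{(t)})/\tau)/\sum_{a'}\exp(\tilde Q_i(s,a';\pi^{(t)})/\tau)$; $\Delta_i^{(t)}(s)=\max_{p\in\Delta(A_i)}(\tilde Q_i^{(t)}(s,p)-\tau\nu_i(s,p))-(\tilde Q_i^{(t)}(s,\pi_i^{(t)}(s))-\tau\nu_i(s,\pi_i^{(t)}))$. If all $\Delta_i^{(t)}(s)\le0$, stop. Else choose $(\bar i_t,\bar s_t)\in\arg\max_{i,s}\Delta_i^{(t)}(s)$, set $\pi_{\bar i_t}^{(t+1)}(\bar s_t)=BR_{\bar i_t}^{(t)}(\bar s_t)$, leave all other components unchanged. *)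

(* Defs.v *)
From HB Require Import structures.
From mathcomp Require Import all_boot all_order all_algebra.
From mathcomp Require Import all_classical all_reals.
From mathcomp Require Import topology normedtype sequences exp.
Unset Printing Implicit Defensive.
Import Order.TTheory GRing.Theory Num.Theory numFieldNormedType.Exports.
Local Open Scope ring_scope.
Local Open Scope classical_set_scope.

Record mgame (R : realType) := MGame {
  player : finType;
  state : finType;
  act : player -> finType;
  reward : player -> state -> {dffun forall i : player, act i} -> R;
  trans : state -> {dffun forall i : player, act i} -> state -> R;
  disc : R }.
Arguments player {R}. Arguments state {R}. Arguments act {R m}.
Arguments reward {R m}. Arguments trans {R m}. Arguments disc {R}.

Definition jact {R : realType} (G : mgame R) := {dffun forall i : player G, act i}.

Definition wf_game {R : realType} (G : mgame R) : Prop :=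
  [/\ (forall (s : state G) (a : jact G) s', 0 <= trans s a s'),
      (forall s (a : jact G), \sum_(s' : state G) trans s a s' = 1),
      0 < disc G < 1 &
      (forall i : player G, (0 < #|act i|)%N)].

Definition is_dist {R : realType} {T : finType} (p : T -> R) : Prop :=
  (forall x, 0 <= p x) /\ \sum_x p x = 1.

Definition profile {R : realType} (G : mgame R) := forall i : player G, state G -> act i -> R.

Definition is_policy {R : realType} {G : mgame R} {i : player G} (p : state G -> act i -> R) :=
  forall s, is_dist (p s).

Definition is_profile {R : realType} {G : mgame R} (pi : profile G) :=
  forall i, is_policy (pi i).

Definition deviate {R : realType} {G : mgame R} (pi : profile G) (i : player G)
  (p : state G -> act i -> R) : profile G :=
  @dfwith _ (fun j => state G -> act j -> R) pi i p.

Definition jprob {R : realType} {G : mgame R} (pi : profile G) (s : state G) (a : jact G) : R :=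
  \prod_(j : player G) pi j s (a j).

(* state distribution at step k: s^0 ~ mu, a^k ~ pi(s^k), s^{k+1} ~ P(.|s^k,a^k) *)
Fixpoint sdist {R : realType} {G : mgame R} (pi : profile G) (mu : state G -> R) (k : nat)
  : state G -> R :=
  match k with
  | O => mu
  | k'.+1 => fun s' => \sum_(s : state G) sdist pi mu k' s *
                  \sum_(a : jact G) jprob pi s a * trans s a s'
  end.

Definition exp_reward {R : realType} {G : mgame R} (pi : profile G) (mu : state G -> R)
  (r : state G -> jact G -> R) (k : nat) : R :=
  \sum_(s : state G) sdist pi mu k s * \sum_(a : jact G) jprob pi s a * r s a.

Definition sumoo {R : realType} (f : nat -> R) : R := limn (series f).

Definition V {R : realType} {G : mgame R} (i : player G) (mu : state G -> R) (pi : profile G) : R :=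
  sumoo (fun k => disc G ^+ k * exp_reward pi mu (reward i) k).

(* nu_i(s, p) = sum_a p(a) log p(a)   (ln 0 = 0, so 0 log 0 = 0) *)
Definition nu {R : realType} {T : finType} (p : T -> R) : R := \sum_a p a * ln (p a).

Definition dirac (R : realType) {T : finType} (s : T) : T -> R := fun s' => (s' == s)%:R.

Definition Vt {R : realType} {G : mgame R} (tau : R) (i : player G) (s : state G) (pi : profile G) : R :=
  sumoo (fun k => disc G ^+ k *
    exp_reward pi (dirac R s) (fun s' a => reward i s' a - tau * nu (pi i s')) k).

(* tilde Q_i(s, a_i; pi): sum over a_{-i} encoded as joint actions a with a i = a_i *)
Definition Qt {R : realType} {G : mgame R} (tau : R) (i : player G) (s : state G) (ai : act i)
  (pi : profile G) : R :=
  \sum_(a : jact G | a i == ai)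
     (\prod_(j : player G | j != i) pi j s (a j)) *
     (reward i s a - tau * nu (pi i s)
        + disc G * \sum_(s' : state G) trans s a s' * Vt tau i s' pi).

Definition Qtp {R : realType} {G : mgame R} (tau : R) (i : player G) (s : state G)
  (pi : profile G) (p : act i -> R) : R :=
  \sum_(ai : act i) p ai * Qt tau i s ai pi.

Definition Delta {R : realType} {G : mgame R} (tau : R) (pi : profile G) (i : player G)
  (s : state G) : R :=
  sup [set x | exists p : act i -> R, is_dist p /\ x = Qtp tau i s pi p - tau * nu p]
  - (Qtp tau i s pi (pi i s) - tau * nu (pi i s)).

Definition BR {R : realType} {G : mgame R} (tau : R) (pi : profile G) (i : player G)
  (s : state G) : act i -> R :=
  fun ai => expR (Qt tau i s ai pi / tau) /
            \sum_(b : act i) expR (Qt tau i s b pi / tau).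

Definition unif_profile {R : realType} (G : mgame R) : profile G :=
  fun i _ _ => (#|act i|%:R)^-1.

Definition update {R : realType} {G : mgame R} (pi : profile G) (i : player G) (s : state G)
  (q : act i -> R) : profile G :=
  deviate pi i (fun s' => if s' == s then q else pi i s').

(* (pis, ib, sb) is a run of SMISBR with parameter tau, in which the algorithm
   does not stop at any step k <= t: pis k = pi^(k), (ib k, sb k) = (ibar_k, sbar_k). *)
Definition smisbr_run_upto {R : realType} {G : mgame R} (tau : R) (pis : nat -> profile G)
  (ib : nat -> player G) (sb : nat -> state G) (t : nat) : Prop :=
  pis 0%N = unif_profile G /\
  forall k, (k <= t)%N ->
    [/\ exists i s, 0 < Delta tau (pis k) i s,
        (forall i s, Delta tau (pis k) i s <= Delta tau (pis k) (ib k) (sb k)) &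
        ((k < t)%N -> pis k.+1 = update (pis k) (ib k) (sb k) (BR tau (pis k) (ib k) (sb k)))].

Definition Abar {R : realType} (G : mgame R) : nat := \max_(i : player G) #|act i|.

(* Main.v *)
Require Import Defs.
From HB Require Import structures.
From mathcomp Require Import all_boot all_order all_algebra.
From mathcomp Require Import all_classical all_reals.
From mathcomp Require Import topology normedtype sequences exp.
From mathcomp Require Import lra.
Import Order.TTheory GRing.Theory Num.Theory.
Import numFieldNormedType.Exports.
Local Open Scope ring_scope.
Local Open Scope classical_set_scope.

Lemma sum_dffun_prod (R : comNzRingType) (I: finType) (T_ : I -> finType) (F : forall i, T_ i -> R) :
  \sum_(a : {dffun forall i, T_ i}) \prod_i F i (a i) = \prod_i \sum_(x : T_ i) F i x.
Proof.
pose P_ := fun i => [ffun x : T_ i => F i x].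
transitivity (\sum_(t : fprod T_) \prod_(i in I) P_ i (t i)).
  rewrite (reindex (@dffun_of_fprod I T_)); last first.
    exact/onW_bij/dffun_of_fprod_bij.
  by apply: eq_bigr => t _; apply: eq_bigr => i _; rewrite /P_ !ffunE.
rewrite big_fprod.
rewrite -(bigA_distr_big_dep (fun i => tagged_with T_ i) (fun i y => untag 0 (P_ i) y)).
apply: eq_bigr => i _. rewrite (big_tag (fun i x => F i x)). rewrite big_mkcond /= [RHS]big_mkcond.
apply: eq_bigr => y _. rewrite /untag; case: eqP => // e; rewrite /P_ ffunE //.
Qed.

Section Gen.
Variable R : realType.

Lemma conv_bound (T : finType) (w x : T -> R) B : (forall j, 0 <= w j) -> \sum_j w j = 1 ->
  (forall j, `|x j| <= B) -> `|\sum_j w j * x j| <= B.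
Proof.
move=> w0 w1 xB; apply: le_trans (ler_norm_sum _ _ _) _.
apply: le_trans (_ : \sum_j w j * B <= B).
  apply: ler_sum => j _; rewrite normrM ger0_norm //; exact: ler_wpM2l.
by rewrite -mulr_suml w1 mul1r.
Qed.

Lemma conv_le (T : finType) (w x y : T -> R) : (forall j, 0 <= w j) ->
  (forall j, x j <= y j) -> \sum_j w j * x j <= \sum_j w j * y j.
Proof. by move=> w0 xy; apply: ler_sum => j _; exact: ler_wpM2l. Qed.

Lemma conv_const (T : finType) (w x : T -> R) c : \sum_j w j = 1 ->
  \sum_j w j * (x j + c) = \sum_j w j * x j + c.
Proof. by move=> w1; rewrite -[c in RHS]mul1r -w1 mulr_suml -big_split; apply: eq_bigr => j _; rewrite mulrDr. Qed.

Lemma dist_le1 (T : finType) (q : T -> R) : is_dist q -> forall a, q a <= 1.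
Proof.
case=> q0 q1 a; rewrite -q1 (bigD1 a) //= lerDl; exact: sumr_ge0.
Qed.

Lemma nu_le0 (T : finType) (q : T -> R) : is_dist q -> nu q <= 0.
Proof.
move=> qd; rewrite /nu; apply: sumr_le0 => a _.
apply: mulr_ge0_le0; first by case: qd.
exact/ln_le0/dist_le1.
Qed.

Lemma gibbs (T : finType) (q : T -> R) : is_dist q -> - nu q <= ln (#|T|%:R).
Proof.
move=> [q0 q1].
have nT : (0 < #|T|)%N.
  rewrite lt0n; apply/negP => /eqP/card0_eq h.
  by move: q1; rewrite big_pred0 // => /esym/eqP; rewrite oner_eq0.
set n : R := #|T|%:R.
have n0 : 0 < n by rewrite ltr0n.
have key : forall a, q a * (- ln (q a) - ln n) <= n^-1 - q a.
  move=> a; have [qa0|qpos] := eqVneq (q a) 0.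
    by rewrite qa0 mul0r subr0 invr_ge0 ltW.
  have qa : 0 < q a by rewrite lt_neqAle eq_sym qpos q0.
  have y0 : 0 < n * q a by exact: mulr_gt0.
  have -> : - ln (q a) - ln n = ln ((n * q a)^-1).
    by rewrite lnV ?posrE // lnM ?posrE // opprD addrC.
  have h : ln ((n * q a)^-1) <= (n * q a)^-1 - 1.
    have := @le_ln1Dx _ ((n * q a)^-1 - 1).
    rewrite [1 + _]addrC subrK; apply. by rewrite ltrBrDl addrN invr_gt0.
  apply: le_trans (ler_wpM2l (ltW qa) h) _.
  rewrite mulrBr mulr1 invfM mulrCA mulfV ?mulr1 //.
have h : \sum_a q a * (- ln (q a) - ln n) <= \sum_a (n^-1 - q a).
  by apply: ler_sum => a _; exact: key.
move: h; rewrite sumrB q1 sumr_const -[_ *+ _]mulr_natr -/n mulVf ?gt_eqF // subrr.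
have -> : \sum_a q a * (- ln (q a) - ln n) = - nu q - ln n.
  have e : ln n = \sum_a q a * ln n by rewrite -mulr_suml q1 mul1r.
  rewrite [in RHS]e /nu -sumrN -sumrB; apply: eq_bigr => a _.
  by rewrite mulrBr mulrN.
by rewrite subr_le0.
Qed.

Lemma cvg_sumf (T : finType) (f : T -> nat -> R) (l : T -> R) :
  (forall j, f j @ \oo --> l j) -> (fun n => \sum_j f j n) @ \oo --> \sum_j l j.
Proof.
move=> cf; elim: (index_enum T) => [|j r IH].
  rewrite big_nil; under eq_cvg do rewrite big_nil; exact: cvg_cst.
rewrite big_cons; under eq_cvg do rewrite big_cons.
exact: cvgD.
Qed.

Lemma series_sumZ (T : finType) (c : T -> R) (y : T -> nat -> R) :
  series (fun k => \sum_j c j * y j k) = (fun n => \sum_j c j * series (y j) n).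
Proof.
apply/funext => n; rewrite /series /=.
rewrite exchange_big /=; apply: eq_bigr => j _; by rewrite mulr_sumr.
Qed.

Lemma lim_sumZ (T : finType) (c : T -> R) (y : T -> nat -> R) :
  (forall j, cvgn (series (y j))) ->
  series (fun k => \sum_j c j * y j k) @ \oo --> \sum_j c j * limn (series (y j)).
Proof.
move=> cy; rewrite series_sumZ; apply: cvg_sumf => j.
apply: cvgMl_tmp; exact: cy.
Qed.

Lemma geo_cvg (dd : R) (x : nat -> R) B : 0 <= dd < 1 -> (forall k, `|x k| <= B) ->
  cvgn (series (fun k => dd ^+ k * x k)).
Proof.
move=> /andP[d0 d1] xB; apply: normed_cvg.
have B0 : 0 <= B by exact: le_trans (normr_ge0 _) (xB 0%N).
apply: (@series_le_cvg _ _ (geometric B dd)).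
- by move=> n /=.
- by move=> n; rewrite /geometric /= mulr_ge0 // exprn_ge0.
- move=> n /=; rewrite normrM ger0_norm ?exprn_ge0 // mulrC; apply: ler_wpM2r => //.
  exact: exprn_ge0.
- by apply: is_cvg_geometric_series; rewrite ger0_norm.
Qed.

Lemma lim_shift (y : nat -> R) : cvgn (series y) ->
  series (fun k => y k.+1) @ \oo --> limn (series y) - y 0%N.
Proof.
move=> cy.
have e : series (fun k => y k.+1) = (fun n => series y n.+1 - y 0%N).
  apply/funext => n; rewrite /series /= big_nat_recl //= addrAC subrr add0r //.
rewrite e; apply: cvgB; last exact: cvg_cst.
by rewrite (cvg_shiftS (series y)); exact: cy.
Qed.

Lemma lim_eq (u : nat -> R) l : u @ \oo --> l -> limn u = l.
Proof. by move=> h; apply: cvg_lim. Qed.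

End Gen.

Section Game.
Variable R : realType.
Variable G : mgame R.
Hypothesis wf : wf_game G.
Local Notation S := (state G).
Local Notation d := (disc G).
Implicit Types (σ : profile G) (μ : S -> R) (r : S -> jact G -> R).

Definition Mk (σ : profile G) (s s' : S) : R := \sum_a jprob σ s a * trans s a s'.

Lemma jprob_ge0 (σ : profile G) : is_profile σ -> forall s a, 0 <= jprob σ s a.
Proof. by move=> H s a; apply: prodr_ge0 => j _; case: (H j s). Qed.
Arguments jprob_ge0 {σ}.

Lemma jprob_sum1 (σ : profile G) : is_profile σ -> forall s, \sum_a jprob σ s a = 1.
Proof.
move=> H s; rewrite /jprob (@sum_dffun_prod R _ _ (fun j x => σ j s x)).
by apply: big1 => j _; case: (H j s).
Qed.
Arguments jprob_sum1 {σ}.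

Lemma Mk_ge0 σ : is_profile σ -> forall s s', 0 <= Mk σ s s'.
Proof.
move=> H s s'; apply: sumr_ge0 => a _; apply: mulr_ge0; first exact: jprob_ge0.
by case: wf => h _ _ _; apply: h.
Qed.
Arguments Mk_ge0 {σ}.

Lemma Mk_sum1 σ : is_profile σ -> forall s, \sum_s' Mk σ s s' = 1.
Proof.
move=> H s; rewrite /Mk exchange_big /= -(jprob_sum1 H s); apply: eq_bigr => a _.
by rewrite -mulr_sumr; case: wf => _ h _ _; rewrite h mulr1.
Qed.
Arguments Mk_sum1 {σ}.

Lemma sum_dirac (s : S) (f : S -> R) : \sum_s0 dirac R s s0 * f s0 = f s.
Proof.
rewrite (bigD1 s) //= /dirac eqxx mul1r big1 ?addr0 // => s0 /negbTE ->.
by rewrite mul0r.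
Qed.

Lemma dirac_dist (s : S) : is_dist (dirac R s).
Proof.
split; first by move=> x; rewrite /dirac ler0n.
by have := sum_dirac s (fun _ => 1); under eq_bigr do rewrite mulr1.
Qed.

Lemma sdistS σ μ k s' : sdist σ μ k.+1 s' = \sum_s sdist σ μ k s * Mk σ s s'.
Proof. by []. Qed.

Lemma sdist_ge0 σ μ k : is_profile σ -> (forall s, 0 <= μ s) -> forall s, 0 <= sdist σ μ k s.
Proof.
move=> H m0; elim: k => [|k IH] s //; rewrite sdistS.
by apply: sumr_ge0 => s0 _; apply: mulr_ge0 => //; exact: Mk_ge0.
Qed.

Lemma sdist_sum1 σ μ k : is_profile σ -> \sum_s μ s = 1 -> \sum_s sdist σ μ k s = 1.
Proof.
move=> H m1; elim: k => [|k IH] //.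
under eq_bigr do rewrite sdistS.
rewrite exchange_big /= -IH; apply: eq_bigr => s _.
by rewrite -mulr_sumr Mk_sum1 // mulr1.
Qed.

Lemma sdist_dist σ μ k : is_profile σ -> is_dist μ -> is_dist (sdist σ μ k).
Proof.
move=> H [m0 m1]; split; [exact: sdist_ge0 | exact: sdist_sum1].
Qed.

Lemma sdist_lin σ μ k s' : sdist σ μ k s' = \sum_s μ s * sdist σ (dirac R s) k s'.
Proof.
elim: k s' => [|k IH] s' /=.
  rewrite (bigD1 s') //= /dirac eqxx mulr1 big1 ?addr0 // => s /negbTE.
  by rewrite eq_sym => ->; rewrite mulr0.
under eq_bigr do rewrite IH mulr_suml.
rewrite exchange_big /=; apply: eq_bigr => s _.
by rewrite mulr_sumr; apply: eq_bigr => s0 _; rewrite mulrA.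
Qed.

Lemma sdist_shift σ μ k s' :
  sdist σ μ k.+1 s' = sdist σ (fun s1 => \sum_s μ s * Mk σ s s1) k s'.
Proof.
elim: k s' => [|k IH] s' //.
rewrite sdistS [RHS]sdistS; apply: eq_bigr => s _; by rewrite IH.
Qed.

Lemma ER_lin σ μ r k :
  exp_reward σ μ r k = \sum_s μ s * exp_reward σ (dirac R s) r k.
Proof.
rewrite /exp_reward; under eq_bigr do rewrite sdist_lin mulr_suml.
rewrite exchange_big /=; apply: eq_bigr => s _.
by rewrite mulr_sumr; apply: eq_bigr => s0 _; rewrite mulrA.
Qed.

Lemma ER_dirac0 σ r s : exp_reward σ (dirac R s) r 0 = \sum_a jprob σ s a * r s a.
Proof. by rewrite /exp_reward /= (sum_dirac s (fun s0 => \sum_a jprob σ s0 a * r s0 a)). Qed.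

Lemma ER_diracS σ r s k : exp_reward σ (dirac R s) r k.+1 =
  \sum_s' Mk σ s s' * exp_reward σ (dirac R s') r k.
Proof.
rewrite /exp_reward; under eq_bigr do rewrite sdist_shift.
have -> : (fun s1 => \sum_s0 dirac R s s0 * Mk σ s0 s1) = Mk σ s.
  by apply/funext => s1; rewrite (sum_dirac s (fun s0 => Mk σ s0 s1)).
exact: (ER_lin σ (Mk σ s) r k).
Qed.


Definition valV σ μ r := limn (series (fun k => d ^+ k * exp_reward σ μ r k)).

Lemma d_range : 0 <= d < 1.
Proof. by case: wf => _ _ /andP[h1 h2] _; rewrite ltW. Qed.

Lemma le_sum_abs (T U : finType) (f : T -> U -> R) t u : `|f t u| <= \sum_t' \sum_u' `|f t' u'|.
Proof.
rewrite (bigD1 t) //= (bigD1 u) //= -addrA lerDl; apply: addr_ge0; apply: sumr_ge0 => *.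
  exact: normr_ge0.
exact: sumr_ge0.
Qed.

Lemma ER_bound σ μ r k : is_profile σ -> is_dist μ ->
  `|exp_reward σ μ r k| <= \sum_s \sum_a `|r s a|.
Proof.
move=> H mu_d; have [sd0 sd1] := sdist_dist σ μ k H mu_d.
apply: conv_bound => // s; apply: conv_bound => //; first exact: jprob_ge0.
  exact: jprob_sum1.
move=> a; exact: le_sum_abs.
Qed.

Lemma cvgV σ μ r : is_profile σ -> is_dist μ ->
  cvgn (series (fun k => d ^+ k * exp_reward σ μ r k)).
Proof. move=> H mu_d; apply: geo_cvg d_range _ => k; exact: ER_bound. Qed.

Lemma valV_lin σ μ r : is_profile σ ->
  valV σ μ r = \sum_s μ s * valV σ (dirac R s) r.
Proof.
move=> H; rewrite /valV.
have -> : (fun k => d ^+ k * exp_reward σ μ r k) =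
   (fun k => \sum_s μ s * (d ^+ k * exp_reward σ (dirac R s) r k)).
  apply/funext => k; rewrite ER_lin mulr_sumr; apply: eq_bigr => s _.
  by rewrite mulrCA.
apply: cvg_lim => //; apply: lim_sumZ => s; apply: cvgV => //; exact: dirac_dist.
Qed.

Lemma bellman σ r s : is_profile σ ->
  valV σ (dirac R s) r = \sum_a jprob σ s a * (r s a + d * \sum_s' trans s a s' * valV σ (dirac R s') r).
Proof.
move=> H.
have cy := cvgV σ (dirac R s) r H (dirac_dist s).
have h := @lim_shift R _ cy.
have e : (fun k => d ^+ k.+1 * exp_reward σ (dirac R s) r k.+1) =
   (fun k => \sum_s' (d * Mk σ s s') * (d ^+ k * exp_reward σ (dirac R s') r k)).
  apply/funext => k; rewrite ER_diracS mulr_sumr exprS; apply: eq_bigr => s' _.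
  by rewrite -!mulrA; congr (_ * _); rewrite mulrCA.
rewrite e in h.
have h2 := @lim_sumZ R _ (fun s' => d * Mk σ s s')
   (fun s' k => d ^+ k * exp_reward σ (dirac R s') r k)
   (fun s' => cvgV σ (dirac R s') r H (dirac_dist s')).
have := @lim_eq R _ _ h2; rewrite (@lim_eq R _ _ h) expr0 mul1r ER_dirac0 => e2.
have e2' : \sum_s' d * Mk σ s s' * valV σ (dirac R s') r =
   valV σ (dirac R s) r - \sum_a jprob σ s a * r s a := esym e2.
apply/eqP; rewrite -subr_eq0; apply/eqP.
have -> : \sum_a jprob σ s a * (r s a + d * \sum_s' trans s a s' * valV σ (dirac R s') r) =
  \sum_a jprob σ s a * r s a + \sum_s' d * Mk σ s s' * valV σ (dirac R s') r.
  rewrite /Mk.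
  have -> : \sum_s' d * (\sum_a jprob σ s a * trans s a s') * valV σ (dirac R s') r =
     \sum_a \sum_s' d * (jprob σ s a * trans s a s') * valV σ (dirac R s') r.
    rewrite exchange_big /=; apply: eq_bigr => s' _; by rewrite mulr_sumr mulr_suml.
  rewrite -big_split /=; apply: eq_bigr => a _.
  rewrite mulrDr; congr (_ + _); rewrite mulrCA mulr_sumr mulr_sumr; apply: eq_bigr => s' _.
  by rewrite !mulrA.
move: e2'; lra.
Qed.

Lemma sdist_next_f σ μ N (f : S -> R) :
  \sum_s' sdist σ μ N.+1 s' * f s' =
  \sum_s sdist σ μ N s * \sum_a jprob σ s a * \sum_s' trans s a s' * f s'.
Proof.
under eq_bigr do rewrite sdistS mulr_suml.
rewrite exchange_big /=; apply: eq_bigr => s _.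
have -> : \sum_a jprob σ s a * \sum_s' trans s a s' * f s' = \sum_s' Mk σ s s' * f s'.
  under eq_bigr do rewrite mulr_sumr.
  rewrite exchange_big /=; apply: eq_bigr => s' _; rewrite /Mk mulr_suml.
  by apply: eq_bigr => a _; rewrite mulrA.
by rewrite mulr_sumr; apply: eq_bigr => s' _; rewrite mulrA.
Qed.

Lemma step_bound σ μ r (f : S -> R) D N : is_profile σ -> is_dist μ ->
  (forall s, \sum_a jprob σ s a * (r s a + d * \sum_s' trans s a s' * f s') <= f s + D) ->
  exp_reward σ μ r N + d * \sum_s' sdist σ μ N.+1 s' * f s' <=
  \sum_s sdist σ μ N s * f s + D.
Proof.
move=> H md hb; have [sd0 sd1] := sdist_dist σ μ N H md.
rewrite sdist_next_f /exp_reward mulr_sumr -big_split /=.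
apply: le_trans (_ : \sum_s sdist σ μ N s * (f s + D) <= _).
  apply: ler_sum => s _; rewrite mulrCA -mulrDr; apply: ler_wpM2l => //.
  apply: le_trans (hb s); rewrite mulr_sumr -big_split /=; apply: ler_sum => a _.
  by rewrite mulrDr mulrCA.
by rewrite conv_const.
Qed.

Lemma telescope σ μ r (f : S -> R) D : is_profile σ -> is_dist μ ->
  (forall s, \sum_a jprob σ s a * (r s a + d * \sum_s' trans s a s' * f s') <= f s + D) ->
  forall N, series (fun k => d ^+ k * exp_reward σ μ r k) N <=
   \sum_s μ s * f s - d ^+ N * \sum_s sdist σ μ N s * f s + D * series (geometric 1 d) N.
Proof.
move=> H md hb; have [d0 _] := andP d_range.
elim=> [|N IH].
  by rewrite /series /= !big_geq // expr0 mul1r subrr mulr0 addr0.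
have st := @step_bound σ μ r f D N H md hb.

have st2 := ler_wpM2l (exprn_ge0 N d0) st.
have g : geometric 1 d N = d ^+ N by rewrite /geometric /= mul1r.
rewrite !seriesS g.
move: IH st2; rewrite !mulrDr !mulrA -exprSr.
lra.
Qed.

Lemma ER_le σ μ (r1 r2 : S -> jact G -> R) k : is_profile σ -> is_dist μ ->
  (forall s a, r1 s a <= r2 s a) -> exp_reward σ μ r1 k <= exp_reward σ μ r2 k.
Proof.
move=> H md hr; have [sd0 _] := sdist_dist σ μ k H md.
apply: conv_le => // s; apply: conv_le => // a; first exact: jprob_ge0.
Qed.

Lemma ER_const σ μ r c k : is_profile σ -> is_dist μ ->
  exp_reward σ μ (fun s a => r s a + c) k = exp_reward σ μ r k + c.
Proof.
move=> H md; have [_ sd1] := sdist_dist σ μ k H md.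
rewrite /exp_reward -conv_const //; apply: eq_bigr => s _; rewrite conv_const //.
exact: jprob_sum1.
Qed.

Lemma deviate_profile π (i : player G) (p : S -> act i -> R) :
  is_profile π -> is_policy p -> is_profile (deviate π i p).
Proof.
move=> H hp j; rewrite /deviate; case: (eqVneq i j) => [<-|nij].
  by rewrite dfwithin.
by rewrite dfwithout.
Qed.

Lemma jprob_split π (i : player G) s (a : jact G) :
  jprob π s a = π i s (a i) * \prod_(j | j != i) π j s (a j).
Proof. by rewrite /jprob (bigD1 i). Qed.

Lemma jprob_dev π (i : player G) (p : S -> act i -> R) s (a : jact G) :
  jprob (deviate π i p) s a = p s (a i) * \prod_(j | j != i) π j s (a j).
Proof.
rewrite (jprob_split _ i) /deviate dfwithin; congr (_ * _); apply: eq_bigr => j hj.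
by rewrite dfwithout // eq_sym.
Qed.

Lemma Qtp_eq tau (i : player G) s π (q : act i -> R) :
  Qtp tau i s π q = \sum_(a : jact G) (q (a i) * \prod_(j | j != i) π j s (a j)) *
     (reward i s a - tau * nu (π i s) + d * \sum_s' trans s a s' * Vt tau i s' π).
Proof.
rewrite /Qtp /Qt.
rewrite [RHS](partition_big (fun a : jact G => a i) predT) //=.
apply: eq_bigr => ai _; rewrite mulr_sumr; apply: eq_bigr => a /eqP <-.
by rewrite mulrA.
Qed.

Lemma unif_profile_ok : is_profile (unif_profile G).
Proof.
move=> i s; split => [a|]; rewrite /unif_profile.
  by rewrite invr_ge0 ler0n.
rewrite sumr_const -[_ *+ _]mulr_natr mulVf // pnatr_eq0 -lt0n.
by case: wf => _ _ _; apply.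
Qed.

Lemma BR_dist tau π (i : player G) s : is_dist (BR tau π i s).
Proof.
have nA : (0 < #|act i|)%N by case: wf => _ _ _; apply.
have /card_gt0P [a0 _] := nA.
set Z := \sum_b expR (Qt tau i s b π / tau).
have Z0 : 0 < Z.
  rewrite /Z (bigD1 a0) //=; apply: ltr_pwDl; first exact: expR_gt0.
  by apply: sumr_ge0 => b _; apply: ltW; exact: expR_gt0.
split => [a|]; rewrite /BR -/Z.
  by apply: divr_ge0; [exact: ltW (expR_gt0 _) | exact: ltW].
by rewrite -mulr_suml -/Z mulfV // gt_eqF.
Qed.

Lemma update_profile π (i : player G) s (q : act i -> R) :
  is_profile π -> is_dist q -> is_profile (update π i s q).
Proof.
move=> H hq; apply: deviate_profile => // s'.
by case: (s' == s) => //; exact: H.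
Qed.

Lemma valid_pis (tau : R) (pis : nat -> profile G) (ib : nat -> player G) (sb : nat -> S) t : smisbr_run_upto tau pis ib sb t ->
  forall k, (k <= t)%N -> is_profile (pis k).
Proof.
move=> [h0 hk]; elim=> [|k IH] hkt; first by rewrite h0; exact: unif_profile_ok.
have [_ _ hnext] := hk k (ltnW hkt).
rewrite hnext //; apply: update_profile; first exact: IH (ltnW hkt).
exact: BR_dist.
Qed.

Lemma Delta_ge tau π (i : player G) s (q : act i -> R) : 0 < tau -> is_dist q ->
  Qtp tau i s π q - tau * nu q - (Qtp tau i s π (π i s) - tau * nu (π i s)) <= Delta tau π i s.
Proof.
move=> t0 qd; rewrite /Delta lerD2r.
set E := [set x | exists p : act i -> R, is_dist p /\ x = Qtp tau i s π p - tau * nu p].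
have hE : has_ubound E.
  exists (\sum_a `|Qt tau i s a π| + tau * ln (#|act i|%:R)) => y [q' [q'd ->]].
  apply: lerD.
    apply: le_trans (ler_norm _) _; rewrite /Qtp; case: q'd => q0 q1.
    apply: conv_bound => // a; rewrite (bigD1 a) //= lerDl; apply: sumr_ge0 => *.
    exact: normr_ge0.
  by rewrite -mulrN; apply: ler_wpM2l; [exact: ltW | exact: gibbs].
apply: (ub_le_sup hE); by exists q.
Qed.

End Game.
Arguments valV {R G}.

Theorem mainTheorem13 (R : realType) (G : mgame R) (tau : R)
  (mu : state G -> R) (pis : nat -> profile G)
  (ib : nat -> player G) (sb : nat -> state G) (t : nat) :
  wf_game G -> 0 < tau -> is_dist mu ->
  smisbr_run_upto tau pis ib sb t ->
  forall (i : player G) (p : state G -> act i -> R), is_policy p ->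
    V i mu (deviate (pis t) i p) - V i mu (pis t)
    <= (1 - disc G)^-1 *
       (Delta tau (pis t) (ib t) (sb t) + 2 * tau * ln ((Abar G)%:R)).
Proof.
move=> wf t0 mud run i p hp.
have [d0 d1] := andP (@d_range R G wf).
have nd1 : `|disc G| < 1 by rewrite ger0_norm.
set π := pis t.
have Hπ : is_profile π by apply: (@valid_pis R G wf _ _ _ _ _ run).
set σ := deviate π i p.
have Hσ : is_profile σ by apply: deviate_profile.
set D := Delta tau π (ib t) (sb t).
have Dmax : forall s, Delta tau π i s <= D.
  by move=> s; have [_ hk] := run; have [_ h _] := hk t (leqnn t); exact: (h i).
set f := fun s => Vt tau i s π.
set rt := fun s (a : jact G) => reward i s a - tau * nu (π i s).
set rp := fun s (a : jact G) => reward i s a - tau * nu (p s).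
have bell : forall s, f s = \sum_a jprob π s a * (rt s a + disc G * \sum_s' trans s a s' * f s').
  move=> s; exact: (@bellman R G wf π rt s Hπ).
have bracket : forall s, \sum_a jprob σ s a * (rp s a + disc G * \sum_s' trans s a s' * f s') <= f s + D.
  move=> s.
  have q1 : Qtp tau i s π (p s) = \sum_a jprob σ s a * (rt s a + disc G * \sum_s' trans s a s' * f s').
    by rewrite Qtp_eq; apply: eq_bigr => a _; rewrite jprob_dev.
  have q2 : Qtp tau i s π (π i s) = f s.
    by rewrite Qtp_eq bell; apply: eq_bigr => a _; rewrite -jprob_split.
  have hD := @Delta_ge R G tau π i s (p s) t0 (hp s).
  have e : \sum_a jprob σ s a * (rp s a + disc G * \sum_s' trans s a s' * f s') =
     \sum_a jprob σ s a * (rt s a + disc G * \sum_s' trans s a s' * f s') + (tau * nu (π i s) - tau * nu (p s)).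
    rewrite -conv_const; last exact: jprob_sum1.
    by apply: eq_bigr => a _; congr (_ * _); rewrite /rp /rt; lra.
  rewrite e -q1; move: hD (Dmax s); rewrite q2; lra.
have T := @telescope R G wf σ mu rp f D Hσ mud bracket.
set F := \sum_s `|f s|.
have cL : cvgn (series (fun k => disc G ^+ k * exp_reward σ mu rp k)) by apply: cvgV.
have gcv : (fun N => \sum_s mu s * f s + F * disc G ^+ N + D * series (geometric 1 (disc G)) N)
   @ \oo --> \sum_s mu s * f s + 0 + D * (1 * (1 - disc G)^-1).
  apply: cvgD; first apply: cvgD.
  - exact: cvg_cst.
  - exact: (@cvg_geometric R F (disc G) nd1).
  - apply: cvgMl_tmp; exact: cvg_geometric_series.
have L1 : valV σ mu rp <= \sum_s mu s * f s + D * (1 - disc G)^-1.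
  have <- : lim ((fun N => \sum_s mu s * f s + F * disc G ^+ N + D * series (geometric 1 (disc G)) N) @ \oo)
     = \sum_s mu s * f s + D * (1 - disc G)^-1.
    by rewrite (@lim_eq R _ _ gcv) addr0 mul1r.
  apply: ler_lim; [exact: cL | exact: (cvgP _ gcv) | apply: nearW => N].
  apply: le_trans (T N) _.
  have [sd0 sd1] := @sdist_dist R G wf σ mu N Hσ mud.
  have hb : `|\sum_s sdist σ mu N s * f s| <= F.
    apply: conv_bound => // s; rewrite /F (bigD1 s) //= lerDl; apply: sumr_ge0 => *.
    exact: normr_ge0.
  have h2 := ler_wpM2l (exprn_ge0 N d0) (lerNnormlW hb).
  move: h2; lra.
have La : V i mu σ <= valV σ mu rp.
  rewrite /V /sumoo /valV; apply: ler_lim.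
  - by apply: cvgV.
  - exact: cL.
  apply: nearW => n; rewrite /series /=; apply: ler_sum => k _.
  apply: ler_wpM2l; first exact: exprn_ge0.
  apply: (@ER_le R G wf) => // s a; rewrite /rp lerDl oppr_ge0.
  by apply: mulr_ge0_le0; [exact: ltW | exact: (@nu_le0 R _ _ (hp s))].
have nA : (0 < #|act i|)%N by case: wf => _ _ _; apply.
have AA : (#|act i| <= Abar G)%N by rewrite /Abar; apply: (@leq_bigmax _ (fun j : player G => #|act j|) i).
have lnA : ln (#|act i|%:R : R) <= ln ((Abar G)%:R).
  by rewrite ler_ln ?posrE ?ltr0n ?ler_nat //; apply: leq_trans AA.
have lnA0 : 0 <= ln ((Abar G)%:R : R).
  by apply: ln_ge0; rewrite ler1n; apply: leq_trans AA.
set c := tau * ln ((Abar G)%:R : R).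
have Lc1 : \sum_s mu s * f s = valV π mu rt by rewrite (@valV_lin R G wf π mu rt Hπ).
have Lc2 : valV π mu rt <= valV π mu (fun s a => reward i s a + c).
  rewrite /valV; apply: ler_lim; [by apply: cvgV | by apply: cvgV | apply: nearW => n].
  rewrite /series /=; apply: ler_sum => k _.
  apply: ler_wpM2l; first exact: exprn_ge0.
  apply: (@ER_le R G wf) => // s a; rewrite /rt lerD2l -mulrN.
  apply: ler_wpM2l; first exact: ltW.
  exact: le_trans (@gibbs R _ _ (Hπ i s)) lnA.
have Lc3 : valV π mu (fun s a => reward i s a + c) = V i mu π + c * (1 - disc G)^-1.
  rewrite /valV.
  have -> : (fun k => disc G ^+ k * exp_reward π mu (fun s a => reward i s a + c) k) =
    (fun k => disc G ^+ k * exp_reward π mu (reward i) k) + geometric c (disc G).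
    apply/funext => k; rewrite (@ER_const R G wf) // mulrDr /geometric /=.
    by rewrite (mulrC (disc G ^+ k) c).
  rewrite lim_seriesD; [|by apply: cvgV | exact: is_cvg_geometric_series].
  by rewrite (@lim_eq R _ _ (@cvg_geometric_series R c (disc G) nd1)).
have c0 : 0 <= c * (1 - disc G)^-1.
  apply: mulr_ge0; first exact: mulr_ge0 (ltW t0) lnA0.
  by rewrite invr_ge0 subr_ge0 ltW.
rewrite -/c; move: La L1 Lc1 Lc2 Lc3 c0; rewrite /c; lra.
Qed.
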